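(* Let $N\ge 2$, $d\ge 1$, and consider the system $$\dot x_i(t)=\frac{1}{N}\sum_{j=1}^N M_{ij}(t)\,(x_j(t)-x_i(t)),\qquad i=1,\dots,N,$$ with $x_i(t)\in\mathbb{R}^d$, where all weights $M_{ij}:[0,+\infty)\to[0,1]$ are Lebesgue measurable, and let $x(t)=(x_1(t),\dots,x_N(t))$ be a solution (in the Carathéodory sense). Fix $T,\mu>0$ and let $G(t)$ be the $(T,\mu)$-connectivity graph associated to the $M_{ij}$. Assume that there exists a constant directed graph $G^*$ on the nodes $\{1,\dots,N\}$ such that all arrows of $G^*$ are arrows of $G(kT)$ for every $k\in\mathbb{N}$, that $G^*$ admits a globally reachable node $I$, and let $d^*:=d(G^*,I)$ be its length to $I$. Set $\tau=d^*T$ and $$C=1-\frac12\left(\frac{\mu T}{N+\mu T}\right)^{d^*}\exp(-2d^*T).$$ Then for all $n\in\mathbb{N}$, $$\max_{i,j}|x_i(n\tau)-x_j(n\tau)|\le C^n\max_{i,j}|x_i(0)-x_j(0)|.$$ Moreover, for all $t\in[0,\tau]$ and $n\in\mathbb{N}$, $$\max_{i,j}|x_i(n\tau+t)-x_j(n\tau+t)|\le \varphi(t)\,C^n\max_{i,j}|x_i(0)-x_j(0)|,$$ where $\delta:=-\frac{N}{2(N-1)}\log(C)$ and $$\varphi(t)=\begin{cases}1 & t\in[0,\tau-\delta],\\ C\exp\!\left(2\frac{N-1}{N}(\tau-t)\right) & t\in[\tau-\delta,\tau].\end{cases}$$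
   Context: $|\cdot|$ is the Euclidean norm. Given $T,\mu>0$ and functions $M_{ij}:[0,+\infty)\to[0,1]$, the $(T,\mu)$-connectivity graph at time $t\ge 0$ is the directed graph $G(t)$ with node set $\{1,\dots,N\}$ in which the arrow $i\to j$ exists iff $\frac1T\int_t^{t+T}M_{ij}(s)\,ds\ge\mu$. A node $I$ of a directed graph $G$ is globally reachable if from every node there is a directed path to $I$. For such $I$, $d(i,I)$ is the minimal number of arrows of a directed path $i\to j_1\to\dots\to j_n=I$ in $G$, and the length of $G$ to $I$ is $d(G,I):=\max_{i} d(i,I)$. $\mathbb{N}$ includes $0$. *)

(* Defs.v *)
From HB Require Import structures.
From mathcomp Require Import all_boot all_order all_algebra.
From mathcomp Require Import all_classical all_reals all_analysis.
Set Implicit Arguments. Unset Strict Implicit. Unset Printing Implicit Defensive.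
Import Order.TTheory GRing.Theory Num.Theory.
Import numFieldNormedType.Exports.
Local Open Scope classical_set_scope.
Local Open Scope ring_scope.

Definition enorm (R : realType) (d : nat) (v : 'rV[R]_d) : R :=
  Num.sqrt (\sum_(k < d) (v ord0 k) ^+ 2).

Definition diam (R : realType) (N d : nat) (x : 'I_N -> R -> 'rV[R]_d) (t : R) : R :=
  \big[Num.max/0]_(i < N) \big[Num.max/0]_(j < N) enorm (x i t - x j t).

(* Caratheodory solution of
   x_i' = 1/N sum_j M_ij (x_j - x_i), on [0,+oo), in integral form:
   the right-hand side is integrable on every [0,t] and x is its primitive. *)
Definition is_solution (R : realType) (N d : nat) (M : 'I_N -> 'I_N -> R -> R)
    (x : 'I_N -> R -> 'rV[R]_d) : Prop :=
  forall (i : 'I_N) (k : 'I_d) (t : R), 0 <= t ->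
    let f := fun s : R => (N%:R)^-1 * \sum_(j < N) M i j s * ((x j s) ord0 k - (x i s) ord0 k) in
    (@lebesgue_measure R).-integrable `[0, t] (EFin \o f) /\
    (x i t) ord0 k = (x i 0) ord0 k + \int[@lebesgue_measure R]_(s in `[0, t]) f s.

Definition conn_arrow (R : realType) (N : nat) (M : 'I_N -> 'I_N -> R -> R)
    (T mu t : R) (i j : 'I_N) : Prop :=
  T^-1 * (\int[@lebesgue_measure R]_(s in `[t, t + T]) M i j s) >= mu.

Fixpoint reachn (N : nat) (e : rel 'I_N) (n : nat) (i I : 'I_N) : bool :=
  match n with
  | 0 => i == I
  | n'.+1 => [exists j, e i j && reachn e n' j I]
  end.

Definition globally_reachable (N : nat) (e : rel 'I_N) (I : 'I_N) : Prop :=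
  forall i, exists n, reachn e n i I.

Definition is_dist (N : nat) (e : rel 'I_N) (i I : 'I_N) (n : nat) : Prop :=
  reachn e n i I /\ forall m, (m < n)%N -> ~~ reachn e m i I.

Definition is_length (N : nat) (e : rel 'I_N) (I : 'I_N) (L : nat) : Prop :=
  (forall i, exists n, is_dist e i I n /\ (n <= L)%N) /\
  (exists i, is_dist e i I L).

(* Main.v *)
Require Import Defs.
From HB Require Import structures.
From mathcomp Require Import all_boot all_order all_algebra.
From mathcomp Require Import all_classical all_reals all_analysis.
From mathcomp Require Import ring lra.
Import Order.TTheory GRing.Theory Num.Theory.
Import numFieldNormedType.Exports.
Local Open Scope classical_set_scope.
Local Open Scope ring_scope.

Section A.
Context {R : realType}.
Notation mu := (@lebesgue_measure R).

Lemma int_cst (a b c : R) : a <= b -> \int[mu]_(u in `[a, b]) c = c * (b - a).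
Proof.
move=> ab; rewrite Rintegral_cst //= lebesgue_measure_itv /= lte_fin.
case: ltP => [_|ba]; first by rewrite -EFinD.
have -> : a = b by apply/le_anti; rewrite ab ba.
by rewrite subrr mulr0.
Qed.

Lemma int_exp (k a b : R) : 0 < k -> a <= b ->
  \int[mu]_(u in `[a, b]) (k * expR (- k * u)) = expR (- k * a) - expR (- k * b).
Proof.
move=> k0; rewrite le_eqVlt => /predU1P[<-|ab].
  by rewrite set_itv1 Rintegral_set1 subrr.
have cexpNM : continuous (fun z : R^o => expR (- k * z)).
  move=> z; apply: continuous_comp; last exact: continuous_expR.
  by apply: continuousM => //; apply: (@continuousN _ R^o); exact: cst_continuous.
rewrite /Rintegral (@continuous_FTC2 _ _ (fun x => - expR (- k * x))) //.
- by rewrite -EFinD /= opprK addrC.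
- apply: continuous_subspaceT => z.
  exact: (@continuousM R R^o (fun=> k) (fun z : R^o => expR (- k * z)) z (@cst_continuous R^o R^o k z) (cexpNM z)).
- split.
  + by move=> z _; exact: ex_derive.
  + by apply/cvg_at_right_filter; apply: cvgN; exact: cexpNM.
  + by apply/cvg_at_left_filter; apply: cvgN; exact: cexpNM.
- move=> z _.
  rewrite derive1_comp// derive1N// derive1_id mulN1r derive1_comp// derive1E.
  have /funeqP -> := @derive_expR R.
  by rewrite derive1Ml// derive1_id mulr1 mulrN opprK mulrC.
Qed.

Lemma near_within_ball (f : R -> R) (A : set R) (x e : R) :
  {within A, continuous f} -> A x -> 0 < e ->
  exists2 d, 0 < d & forall y, A y -> `|x - y| < d -> `|f x - f y| < e.
Proof.
move=> cf Ax e0.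
have := (subspace_continuousP A f).1 cf x Ax.
move/cvgrPdist_lt => /(_ e e0).
rewrite near_withinE => /nbhs_ballP[d d0 H].
by exists d => // y Ay xy; apply: H => //; rewrite /ball /=.
Qed.

Lemma sub_cc (a b c d : R) : a <= c -> d <= b -> [set` `[c, d]] `<=` [set` `[a, b]].
Proof.
move=> ac db u /=; rewrite !in_itv /= => /andP[cu ud]; apply/andP; split.
  exact: le_trans ac cu.
exact: le_trans ud db.
Qed.

Lemma cont_sub (f : R -> R) (a b c d : R) : {within `[a, b], continuous f} ->
  a <= c -> d <= b -> {within `[c, d], continuous f}.
Proof. by move=> cf ac db; apply: continuous_subspaceW cf; exact: sub_cc. Qed.
Arguments cont_sub {f a b c d}.

Lemma LZ (f : R -> R) a b : a <= b -> {within `[a, b], continuous f} ->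
  0 <= f a -> f b < 0 ->
  exists s, [/\ a <= s, s <= b, f s = 0 & forall u, s <= u -> u <= b -> f u <= 0].
Proof.
move=> ab cf fa fb.
pose Z := [set u | a <= u <= b /\ f u = 0].
have [c cab fc] : exists2 c, c \in `[a, b] & f c = 0.
  by apply: IVT => //; rewrite ge_min (ltW fb) orbT le_max fa.
have Zc : Z c by split => //; move: cab; rewrite in_itv.
have Zub : ubound Z b by move=> u [/andP[]].
have hs : has_sup Z by split; [exists c | exists b].
pose s := sup Z.
have cs : c <= s by apply: sup_upper_bound.
have sb : s <= b by apply: ge_sup => //; exists c.
have acs : a <= s by move: cab; rewrite in_itv => /andP[ac _]; apply: le_trans cs.
have fs : f s = 0.
  apply/eqP; apply: contraT => fs0.
  have e0 : 0 < `|f s| by rewrite normr_gt0.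
  have As : [set` `[a, b]] s by rewrite /= in_itv /= acs sb.
  have [d d0 H] := @near_within_ball f _ s _ cf As e0.
  have [z Zz zs] := sup_adherent d0 hs.
  have zs' : z <= s by apply: sup_upper_bound.
  case: Zz => /andP[az zb] fz.
  have Az : [set` `[a, b]] z by rewrite /= in_itv /= az zb.
  have : `|s - z| < d by rewrite ger0_norm ?subr_ge0 //; move: zs; rewrite -/s; lra.
  by move/(H z Az); rewrite fz subr0 ltxx.
exists s; split => // u su ub.
rewrite leNgt; apply/negP => fu.
have [z zub fz] : exists2 z, z \in `[u, b] & f z = 0.
  apply: IVT => //; first exact: cont_sub cf (le_trans acs su) (lexx b).
  by rewrite ge_min (ltW fb) orbT le_max (ltW fu).
move: zub; rewrite in_itv /= => /andP[uz zb].
have zs : z <= s by apply: sup_upper_bound => //; split => //; rewrite (le_trans acs (le_trans su uz)) zb.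
have uz' : u = z by apply/le_anti; rewrite uz (le_trans zs su).
by move: fu; rewrite uz' fz ltxx.
Qed.

Lemma cint (f : R -> R) (a b : R) : {within `[a, b], continuous f} ->
  mu.-integrable `[a, b] (EFin \o f).
Proof. by move=> cf; apply: continuous_compact_integrable => //; exact: segment_compact. Qed.
Arguments cint {f a b}.

Lemma int_split (g : R -> R) a b c : a <= b -> b <= c ->
  mu.-integrable `[a, c] (EFin \o g) ->
  \int[mu]_(u in `[a, c]) g u - \int[mu]_(u in `[a, b]) g u = \int[mu]_(u in `[b, c]) g u.
Proof.
move=> ab bc ig.
rewrite (@Rintegral_itvB _ g (BLeft a) (BRight c) b) //; try by rewrite bnd_simp.
rewrite Rintegral_itv_obnd_cbnd //.
apply: integrableS ig => //.
by move=> u /=; rewrite !in_itv /= => /andP[bu ->]; rewrite andbT (le_trans ab) // ltW.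
Qed.

Lemma int_set1 (g : R -> R) a : \int[mu]_(u in `[a, a]) g u = 0.
Proof. by rewrite set_itv1 Rintegral_set1. Qed.

Lemma cexpA (k c : R) : continuous (fun u : R => expR (c + k * u)).
Proof.
move=> u; apply: continuous_comp; last exact: continuous_expR.
apply: (@continuousD _ R^o); first exact: cst_continuous.
apply: (@continuousM R R^o (fun=> k) id); first exact: cst_continuous.
by move=> ?.
Qed.

Lemma wcM (A : set R) (f g : R -> R) : {within A, continuous f} -> {within A, continuous g} ->
  {within A, continuous (fun u => f u * g u)}.
Proof.
move=> cf cg; apply/subspace_continuousP => x Ax.
apply: (@cvgM R R _ _ f g).
  exact: (subspace_continuousP _ _).1 cf x Ax.
exact: (subspace_continuousP _ _).1 cg x Ax.
Qed.
Lemma wcD (A : set R) (f g : R -> R) : {within A, continuous f} -> {within A, continuous g} ->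
  {within A, continuous (fun u => f u + g u)}.
Proof.
move=> cf cg; apply/subspace_continuousP => x Ax.
apply: (@cvgD R R^o R _ _ f g).
  exact: (subspace_continuousP _ _).1 cf x Ax.
exact: (subspace_continuousP _ _).1 cg x Ax.
Qed.
Lemma wcN (A : set R) (f : R -> R) : {within A, continuous f} ->
  {within A, continuous (fun u => - f u)}.
Proof.
move=> cf; apply/subspace_continuousP => x Ax.
apply: (@cvgN R R^o R _ _ f).
exact: (subspace_continuousP _ _).1 cf x Ax.
Qed.
Lemma wcc (A : set R) (c : R) : {within A, continuous (fun _ => c)}.
Proof. by apply: continuous_subspaceT; exact: cst_continuous. Qed.

Lemma cmulc (c : R) (f : R -> R) : continuous f -> continuous (fun u : R => c * f u).
Proof.
move=> cf u; apply: (@continuousM R R^o (fun=> c) f); first exact: cst_continuous.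
exact: cf.
Qed.

Lemma cexpB (c : R) : continuous (fun u : R => expR (c - u)).
Proof.
move=> u; apply: continuous_comp; last exact: continuous_expR.
apply: (@continuousB _ R^o); first exact: cst_continuous.
by move=> ?.
Qed.

Lemma int_lam (s a r : R) : a <= r ->
  \int[mu]_(u in `[a, r]) expR (s - u) = expR (s - a) - expR (s - r).
Proof.
move=> ar.
have ce : continuous (fun u : R => 1 * expR (- 1 * u)).
  apply: cmulc.
  have := @cexpA (-1) 0; under eq_fun do rewrite add0r; exact.
transitivity (\int[mu]_(u in `[a, r]) (expR s * (1 * expR (- 1 * u)))).
  by apply: eq_Rintegral => u _; rewrite mul1r mulN1r expRD.
rewrite RintegralZl //; last by apply: cint; apply: continuous_subspaceT.
by rewrite int_exp // ?ltr01 // !mulN1r mulrBr -!expRD.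
Qed.

Lemma cmp (z h : R -> R) (s t : R) :
  s <= t -> {within `[s, t], continuous z} ->
  (forall u, s <= u -> u <= t -> 0 <= h u) ->
  mu.-integrable `[s, t] (EFin \o h) -> 0 <= z s ->
  (forall a r, s <= a -> a <= r -> r <= t ->
     \int[mu]_(u in `[a, r]) h u - \int[mu]_(u in `[a, r]) z u <= z r - z a) ->
  expR (s - t) * (z s + \int[mu]_(u in `[s, t]) h u) <= z t.
Proof.
move=> st cz h0 ih zs0 hz.
pose H u := \int[mu]_(v in `[s, u]) h v.
pose lam u := expR (s - u).
pose p u := lam u * (z s + H u).
have hH a r : s <= a -> a <= r -> r <= t -> H r - H a = \int[mu]_(u in `[a, r]) h u.
  move=> sa ar rt; apply: int_split => //.
  by apply: integrableS ih => //; apply: sub_cc.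
have Hs : H s = 0 by rewrite /H int_set1.
have Hge a r : s <= a -> a <= r -> r <= t -> H a <= H r.
  move=> sa ar rt; rewrite -subr_ge0 hH //; apply: Rintegral_ge0 => u /=.
  rewrite in_itv /= => /andP[au ur]; apply: h0; [exact: le_trans sa au|exact: le_trans ur rt].
have cH : {within `[s, t], continuous H}.
  exact: parameterized_integral_continuous.
have clam : continuous lam.
  move=> u; apply: continuous_comp; last exact: continuous_expR.
  by apply: continuousB => //; exact: cst_continuous.
have cp : {within `[s, t], continuous p}.
  apply: wcM; first exact: continuous_subspaceT.
  by apply: wcD => //; exact: wcc.
rewrite leNgt; apply/negP => ztp.
pose q u := z u - p u.
have cq : {within `[s, t], continuous q}.
  by apply: wcD => //; exact: wcN.
have q0 : 0 <= q s by rewrite /q /p /lam Hs subrr expR0 mul1r addr0 subrr.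
have qt : q t < 0 by rewrite /q subr_lt0.
have [sg [ssg sgt qsg qle]] := @LZ q s t st cq q0 qt.
have zp u : sg <= u -> u <= t -> z u <= p u.
  by move=> h1 h2; have := qle u h1 h2; rewrite /q subr_le0.
have clamw : {within `[sg, t], continuous lam} by apply: continuous_subspaceT.
have cHw : {within `[sg, t], continuous H} by apply: cont_sub cH ssg (lexx t).
have ip := cint (cont_sub cp ssg (lexx t)).
have iz := cint (cont_sub cz ssg (lexx t)).
have key1 : \int[mu]_(u in `[sg, t]) h u - \int[mu]_(u in `[sg, t]) p u <= z t - z sg.
  apply: le_trans (hz sg t ssg sgt (lexx t)); rewrite lerD2l lerN2.
  apply: le_Rintegral => // u /=; rewrite in_itv /= => /andP[]; exact: zp.
have intp : \int[mu]_(u in `[sg, t]) p u =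
    (lam sg - lam t) * z s + \int[mu]_(u in `[sg, t]) (lam u * H u).
  transitivity (\int[mu]_(u in `[sg, t]) (lam u * z s + lam u * H u)).
    by apply: eq_Rintegral => u _; rewrite /p mulrDr.
  rewrite RintegralD //; first last.
  - by apply: cint; apply: wcM.
  - by apply: cint; apply: wcM => //; exact: wcc.
  by rewrite RintegralZr //; [rewrite int_lam | apply: cint].
have intlH : \int[mu]_(u in `[sg, t]) (lam u * H u) <= (lam sg - lam t) * H t.
  apply: (@le_trans _ _ (\int[mu]_(u in `[sg, t]) (lam u * H t))).
    apply: le_Rintegral => //.
    - by apply: cint; apply: wcM.
    - by apply: cint; apply: wcM => //; exact: wcc.
    move=> u /=; rewrite in_itv /= => /andP[sgu ut].
    by apply: ler_wpM2l; [exact: ltW (expR_gt0 _)| apply: Hge => //; exact: le_trans sgu].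
  by rewrite RintegralZr //; [rewrite int_lam | apply: cint].
have ih' : \int[mu]_(u in `[sg, t]) h u = H t - H sg by rewrite hH.
have lam1 : lam sg <= 1 by rewrite /lam expR_le1 subr_le0.
have Hsgt : H sg <= H t by apply: Hge.
have qs : z sg = p sg by apply/eqP; rewrite -subr_eq0; apply/eqP.
have pr : 0 <= (H t - H sg) * (1 - lam sg) by apply: mulr_ge0; rewrite subr_ge0.
move: qt; rewrite /q /p => qt.
move: key1; rewrite intp ih' qs /p => key1.
nra.
Qed.

End A.

Section B.
Context {R : realType}.
Notation mu := (@lebesgue_measure R).
Context (N : nat) (M : 'I_N -> 'I_N -> R -> R).

Definition Gf (z : 'I_N -> R -> R) (i : 'I_N) (u : R) : R :=
  N%:R^-1 * \sum_(l < N) M i l u * (z l u - z i u).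

Definition ssol (z : 'I_N -> R -> R) : Prop := forall i,
  (forall a b, 0 <= a -> a <= b -> {within `[a, b], continuous (z i)}) /\
  (forall a b, 0 <= a -> a <= b ->
     mu.-integrable `[a, b] (EFin \o Gf z i) /\
     z i b - z i a = \int[mu]_(u in `[a, b]) Gf z i u).

Context (hN : (0 < N)%N) (HM : forall i j t, 0 <= t -> 0 <= M i j t <= 1).

Lemma exmin (F : 'I_N -> R) : exists i0, forall i, F i0 <= F i.
Proof.
case: (@Order.TotalTheory.arg_minP _ R _ (Ordinal hN) xpredT F erefl) => i _ H.
by exists i => j; apply: H.
Qed.

Lemma exmax (F : 'I_N -> R) : exists i0, forall i, F i <= F i0.
Proof.
have [i0 H] := exmin (fun i => - F i).
by exists i0 => i; rewrite -lerN2; apply: H.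
Qed.

Lemma Nr_gt0 : 0 < N%:R :> R.
Proof. by rewrite ltr0n. Qed.

Lemma sum_cst_ord (c : R) : \sum_(l < N) c = c * N%:R.
Proof. by rewrite sumr_const card_ord mulr_natr. Qed.

Lemma inv_step z s : ssol z -> 0 <= s -> (forall i, 0 <= z i s) ->
  forall t, s <= t -> t <= s + 2^-1 -> forall i, 0 <= z i t.
Proof.
move=> hz s0 zs t st ts.
set b := s + 2^-1.
have sb : s <= b by rewrite /b lerDl.
have : forall i, exists c, c \in `[s, b] /\ forall u, u \in `[s, b] -> z i c <= z i u.
  move=> i; have [c cab H] := EVT_min sb ((hz i).1 s b s0 sb); by exists c.
case/fin_all_exists => c Hc.
have [i0 Hi0] := exmin (fun i => z i (c i)).
set m := z i0 (c i0).
have mle l u : u \in `[s, b] -> m <= z l u.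
  by move=> ub; apply: le_trans (Hi0 l) ((Hc l).2 u ub).
suff m0 : 0 <= m by move=> i; apply: le_trans m0 (mle i t _); rewrite in_itv /= st ts.
rewrite leNgt; apply/negP => m0.
have := (Hc i0).1; rewrite in_itv /= => /andP[cs cb].
have [sg [ssg sgc zsg zle]] := @LZ _ (z i0) s (c i0) cs ((hz i0).1 s (c i0) s0 cs) (zs i0) m0.
have sg0 : 0 <= sg by apply: le_trans ssg.
have [iG eqG] := (hz i0).2 sg (c i0) sg0 sgc.
have : m * (c i0 - sg) <= z i0 (c i0) - z i0 sg.
  rewrite eqG -int_cst //; apply: le_Rintegral => //.
    by apply: cint; apply: wcc.
  move=> u /=; rewrite in_itv /= => /andP[sgu uc].
  have u0 : 0 <= u by apply: le_trans sgu.
  have ub : u \in `[s, b] by rewrite in_itv /= (le_trans ssg sgu) (le_trans uc cb).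
  have ziu := zle u sgu uc.
  rewrite /Gf -[m](@mulKf _ N%:R) ?gt_eqF ?Nr_gt0 //.
  apply: ler_wpM2l; first by rewrite invr_ge0 ltW ?Nr_gt0.
  rewrite mulrC -sum_cst_ord; apply: ler_sum => l _.
  have /andP[M0 M1] := HM i0 l u u0.
  have zlu := mle l u ub.
  nra.
have csg : c i0 - sg <= 2^-1.
  by move: cb ssg; rewrite /b; lra.
rewrite -/m zsg subr0 => hh.
have : m * 2^-1 <= m * (c i0 - sg) by rewrite ler_wnM2l // ltW.
move: m0 hh; nra.
Qed.

Lemma inv z s : ssol z -> 0 <= s -> (forall i, 0 <= z i s) ->
  forall t, s <= t -> forall i, 0 <= z i t.
Proof.
move=> hz s0 zs.
have H : forall k : nat, forall t, s <= t -> t <= s + k%:R * 2^-1 -> forall i, 0 <= z i t.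
  elim=> [|k IH] t st tk.
    have -> : t = s by apply/le_anti; rewrite st andbT; move: tk; rewrite mul0r addr0.
    exact: zs.
  case: (leP t (s + k%:R * 2^-1)) => tk'; first exact: IH.
  have s1 : s <= s + k%:R * 2^-1 by rewrite lerDl mulr_ge0.
  apply: (@inv_step z (s + k%:R * 2^-1)) => //.
  - exact: le_trans s1.
  - by apply: IH.
  - exact: ltW.
  - by move: tk; rewrite -addn1 natrD; lra.
move=> t st; apply: (H (Num.bound (2 * (t - s)))) => //.
have := @archi_boundP R (2 * (t - s)) _; rewrite mulr_ge0 // ?subr_ge0 // => /(_ isT).
by lra.
Qed.

Lemma Gf_aff z al be i u : Gf (fun l v => al * z l v + be) i u = al * Gf z i u.
Proof.
rewrite /Gf mulrCA; congr (_ * _); rewrite mulr_sumr; apply: eq_bigr => l _.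
by rewrite /=; ring.
Qed.

Lemma ssol_aff z al be : ssol z -> ssol (fun l v => al * z l v + be).
Proof.
move=> hz i; have [hc hi] := hz i; split.
  move=> a b a0 ab; apply: wcD; last exact: wcc.
  by apply: wcM; [exact: wcc | exact: hc].
move=> a b a0 ab; have [ig eqg] := hi a b a0 ab.
have -> : Gf (fun l v => al * z l v + be) i = fun u => al * Gf z i u.
  by apply/funext => u; rewrite Gf_aff.
split.
  have -> : (EFin \o fun u => al * Gf z i u) = (fun u => al%:E * (EFin \o Gf z i) u)%E.
    by apply/funext => u /=; rewrite EFinM.
  exact: integrableZl.
rewrite RintegralZl // -eqg; ring.
Qed.

Lemma G_lb z l j u (al : R) : 0 <= u -> (forall m, 0 <= z m u) -> 0 <= al -> al <= z j u ->
  N%:R^-1 * (al * M l j u) - z l u <= Gf z l u.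
Proof.
move=> u0 zu al0 alz.
have S1 : M l j u * z j u <= \sum_(m < N) M l m u * z m u.
  rewrite (bigD1 j) //= lerDl; apply: sumr_ge0 => m _.
  by apply: mulr_ge0 => //; have /andP[] := HM l m u u0.
have S2 : \sum_(m < N) M l m u <= N%:R.
  rewrite -[X in _ <= X]mul1r -sum_cst_ord; apply: ler_sum => m _.
  by have /andP[] := HM l m u u0.
have e : \sum_(m < N) M l m u * (z m u - z l u) =
    \sum_(m < N) M l m u * z m u - (\sum_(m < N) M l m u) * z l u.
  rewrite mulr_suml -sumrB; apply: eq_bigr => m _; ring.
rewrite /Gf e.
have /andP[Mj0 Mj1] := HM l j u u0.
have Nin : 0 < N%:R^-1 :> R by rewrite invr_gt0 Nr_gt0.
have NN : N%:R^-1 * N%:R = 1 :> R by rewrite mulVf // gt_eqF ?Nr_gt0.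
have zl := zu l.
have h1 : al * M l j u <= \sum_(m < N) M l m u * z m u.
  apply: le_trans S1; rewrite mulrC; exact: ler_wpM2l.
set S := \sum_(m < N) M l m u * z m u in h1 *.
set T2 := \sum_(m < N) M l m u in S2 *.
have hB : N%:R^-1 * (T2 * z l u) <= z l u.
  apply: (@le_trans _ _ (N%:R^-1 * (N%:R * z l u))).
    by apply: ler_wpM2l; [exact: ltW | exact: ler_wpM2r].
  by rewrite mulrA NN mul1r.
have hA : N%:R^-1 * (al * M l j u) <= N%:R^-1 * S by apply: ler_wpM2l => //; exact: ltW.
rewrite mulrBr; lra.
Qed.

Lemma intZ (f : R -> R) (a b : R) (c : R) : mu.-integrable `[a, b] (EFin \o f) ->
  mu.-integrable `[a, b] (EFin \o (fun u => c * f u)).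
Proof.
move=> hf.
have -> : (EFin \o fun u => c * f u) = (fun u => c%:E * (EFin \o f) u)%E.
  by apply/funext => u /=; rewrite EFinM.
exact: integrableZl.
Qed.

Lemma intM (HMmeas : forall i j, measurable_fun (`[0%R, +oo[%classic : set R) (M i j))
  l j (a b : R) : 0 <= a -> mu.-integrable `[a, b] (EFin \o M l j).
Proof.
move=> a0; apply: measurable_bounded_integrable => //.
- by apply: compact_finite_measure; exact: segment_compact.
- apply: measurable_funS (HMmeas l j) => //.
  by move=> u /=; rewrite !in_itv /= => /andP[au _]; rewrite andbT (le_trans a0 au).
- exists 1; split; rewrite ?num_real // => x x1 y /=; rewrite in_itv /= => /andP[ay _].
  have /andP[h0 h1] := HM l j y (le_trans a0 ay).
  by rewrite ger0_norm // (le_trans h1) // ltW.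
Qed.

Lemma intB (f g : R -> R) (a b : R) : mu.-integrable `[a, b] (EFin \o f) ->
  mu.-integrable `[a, b] (EFin \o g) ->
  mu.-integrable `[a, b] (EFin \o (fun u => f u - g u)).
Proof.
move=> hf hg.
have -> : (EFin \o fun u => f u - g u) = ((EFin \o f) \- (EFin \o g))%E.
  by apply/funext => u /=; rewrite EFinB.
exact: integrableB.
Qed.

Context (HMmeas : forall i j, measurable_fun (`[0%R, +oo[%classic : set R) (M i j)).

Lemma hyp_cmp z l j a r (al : R) : ssol z -> 0 <= a -> a <= r ->
  (forall u, a <= u -> u <= r -> forall m, 0 <= z m u) -> 0 <= al ->
  (forall u, a <= u -> u <= r -> al <= z j u) ->
  \int[mu]_(u in `[a, r]) (N%:R^-1 * (al * M l j u)) - \int[mu]_(u in `[a, r]) z l u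
    <= z l r - z l a.
Proof.
move=> hz a0 ar zu al0 alz.
have [ig eqg] := (hz l).2 a r a0 ar.
have ih : mu.-integrable `[a, r] (EFin \o (fun u => N%:R^-1 * (al * M l j u))).
  by apply: intZ; apply: intZ; exact: intM.
have iz : mu.-integrable `[a, r] (EFin \o z l) by apply: cint; exact: (hz l).1.
rewrite eqg -RintegralB //; apply: le_Rintegral => //; first exact: intB.
move=> u /=; rewrite in_itv /= => /andP[au ur].
apply: G_lb => //; [exact: le_trans au | exact: zu | exact: alz].
Qed.

Lemma decay z l s t : ssol z -> 0 <= s -> s <= t -> (forall m, 0 <= z m s) ->
  expR (s - t) * z l s <= z l t.
Proof.
move=> hz s0 st zs.
have zu u : s <= u -> forall m, 0 <= z m u by move=> su m; exact: (@inv z s hz s0 zs u su m).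
have := @cmp _ (z l) (fun _ => 0) s t st ((hz l).1 s t s0 st) (fun _ _ _ => lexx 0) _ (zs l).
rewrite int_cst // mul0r addr0; apply.
- by apply: cint; exact: wcc.
- move=> a r sa ar rt.
  have := @hyp_cmp z l l a r 0 hz (le_trans s0 sa) ar _ (lexx 0) _.
  rewrite (@eq_Rintegral _ _ _ _ _ (fun _ => 0)); last by move=> u _; rewrite !mul0r mulr0.
  apply.
  + by move=> u au _; apply: zu; exact: le_trans au.
  + by move=> u au _; apply: zu; exact: le_trans au.
Qed.

Lemma prop z s0 A (T mu0 a : R) (Gs : rel 'I_N) (I : 'I_N) :
  ssol z -> 0 <= s0 -> 0 < T -> (forall m, 0 <= z m s0) -> 0 <= A -> A <= z I s0 ->
  0 <= a -> a <= mu0 * T / N%:R ->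
  (forall (k : nat) l j, Gs l j ->
     mu0 <= T^-1 * \int[mu]_(u in `[s0 + k%:R * T, s0 + k%:R * T + T]) M l j u) ->
  forall k l, reachn Gs k l I ->
    A * a ^+ k * expR (- (2 * k%:R * T)) <= z l (s0 + k%:R * T).
Proof.
move=> hz s00 T0 zs A0 AI a0 aN Hw.
have zu u : s0 <= u -> forall m, 0 <= z m u by move=> su m; exact: (@inv z s0 hz s00 zs u su m).
elim=> [|k IH] l.
  rewrite /= => /eqP ->; rewrite expr0 mulr1 !mul0r mulr0 addr0.
  by rewrite mul0r oppr0 expR0 mulr1.
rewrite /= => /existsP[j /andP[Gslj rj]].
set w := s0 + k%:R * T.
have sw : s0 <= w by rewrite /w lerDl mulr_ge0 // ltW.
have hw : s0 + k.+1%:R * T = w + T by rewrite /w -addn1 natrD mulrDl mul1r addrA.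
rewrite hw.
set be := A * a ^+ k * expR (- (2 * k%:R * T)).
have be0 : 0 <= be by rewrite /be mulr_ge0 // ?mulr_ge0 ?exprn_ge0 // ltW // expR_gt0.
have IHj : be <= z j w := IH j rj.
set E := expR (- T).
have E0 : 0 < E by apply: expR_gt0.
have zj u : w <= u -> u <= w + T -> E * be <= z j u.
  move=> wu uwT.
  have := @decay z j w u hz (le_trans s00 sw) wu (zu w sw).
  apply: le_trans; apply: ler_pM => //; first exact: ltW.
  by rewrite ler_expR; lra.
set al := E * be.
have al0 : 0 <= al by rewrite mulr_ge0 // ltW.
have wT : w <= w + T by rewrite lerDl ltW.
have w0 : 0 <= w by apply: le_trans sw.
have hc : expR (w - (w + T)) * (z l w + \int[mu]_(u in `[w, w + T]) (N%:R^-1 * (al * M l j u)))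
    <= z l (w + T).
  apply: (@cmp _ (z l) (fun u => N%:R^-1 * (al * M l j u)) w (w + T) wT
    ((hz l).1 w (w + T) w0 wT)) => //.
  - move=> u wu _; apply: mulr_ge0; first by rewrite invr_ge0 ler0n.
    by apply: mulr_ge0 => //; have /andP[] := HM l j u (le_trans w0 wu).
  - by apply: intZ; apply: intZ; exact: intM.
  - exact: zu.
  - move=> a' r wa ar rT.
    apply: hyp_cmp => //.
    + exact: le_trans wa.
    + by move=> u au _; apply: zu; apply: le_trans au; exact: le_trans wa.
    + by move=> u au ur; apply: zj; [exact: le_trans au | exact: le_trans rT].
have intM' : mu0 * T <= \int[mu]_(u in `[w, w + T]) M l j u.
  have := Hw k l j Gslj; rewrite -/w => h.
  apply: le_trans (ler_wpM2r (ltW T0) h) _.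
  by rewrite mulrAC mulVf ?gt_eqF // mul1r.
have eqi : \int[mu]_(u in `[w, w + T]) (N%:R^-1 * (al * M l j u)) =
    N%:R^-1 * al * \int[mu]_(u in `[w, w + T]) M l j u.
  rewrite RintegralZl //; last by apply: intZ; exact: intM.
  by rewrite RintegralZl ?mulrA //; exact: intM.
move: hc; rewrite eqi (_ : w - (w + T) = - T); last by ring.
rewrite -/E => hc.
have eE : expR (- (2 * k.+1%:R * T)) = expR (- (2 * k%:R * T)) * E * E.
  by rewrite /E -!expRD; congr expR; rewrite -addn1 natrD; ring.
rewrite exprSr eE.
have -> : A * (a ^+ k * a) * (expR (- (2 * k%:R * T)) * E * E) = be * a * E * E.
  by rewrite /be; ring.
have zlw := zu w sw l.
set Ni := N%:R^-1 in hc aN *.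
set I1 := \int[mu]_(u in `[w, w + T]) M l j u in hc intM' *.
have Ni0 : 0 < Ni by rewrite /Ni invr_gt0 Nr_gt0.
have h1 : be * a * E * E <= E * (Ni * al * (mu0 * T)).
  rewrite /al; move: aN; rewrite mulrC => aN.
  have -> : be * a * E * E = be * E * E * a by ring.
  have -> : E * (Ni * (E * be) * (mu0 * T)) = be * E * E * (Ni * (mu0 * T)) by ring.
  have E0' := ltW E0.
  apply: ler_wpM2l; last exact: aN.
  by apply: mulr_ge0; [apply: mulr_ge0|].
apply: le_trans h1 _; apply: le_trans hc.
apply: ler_wpM2l; first exact: ltW.
rewrite -[X in X <= _]add0r; apply: lerD => //.
by apply: ler_wpM2l => //; rewrite mulr_ge0 // ltW.
Qed.

End B.

Set Implicit Arguments. Unset Strict Implicit.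
Section C.
Context {R : realType}.
Notation mu := (@lebesgue_measure R).
Context (N : nat) (M : 'I_N -> 'I_N -> R -> R).
Context (hN : (0 < N)%N) (HM : forall i j t, 0 <= t -> 0 <= M i j t <= 1).

Definition Dy (y : 'I_N -> R -> R) (u : R) : R :=
  \big[Num.max/0]_(i < N) \big[Num.max/0]_(j < N) (y i u - y j u).

Lemma Dy_ge y u i j : y i u - y j u <= Dy y u.
Proof. by apply: le_trans (le_bigmax _ _ i); apply: (le_bigmax _ (fun j => y i u - y j u) j). Qed.

Lemma Dy_le y u B : 0 <= B -> (forall i j, y i u - y j u <= B) -> Dy y u <= B.
Proof. by move=> B0 H; apply: bigmax_le => // i _; apply: bigmax_le => // j _. Qed.

Lemma Dy_ge0 y u : 0 <= Dy y u.
Proof. by have := Dy_ge y u (Ordinal hN) (Ordinal hN); rewrite subrr. Qed.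

Lemma wcMax (A : set R) (f g : R -> R) : {within A, continuous f} -> {within A, continuous g} ->
  {within A, continuous (fun u => Num.max (f u) (g u))}.
Proof. by move=> cf cg x; apply: continuous_max; [exact: cf | exact: cg]. Qed.

Lemma wc_bigmax (A : set R) (I : Type) (s : seq I) (F : I -> R -> R) :
  (forall i, {within A, continuous (F i)}) ->
  {within A, continuous (fun u => \big[Num.max/0]_(i <- s) F i u)}.
Proof.
move=> cF; elim: s => [|i s IH].
  under eq_fun do rewrite big_nil; exact: wcc.
under eq_fun do rewrite big_cons; exact: wcMax.
Qed.

Lemma Dy_cont y a b : (forall i, {within `[a, b], continuous (y i)}) ->
  {within `[a, b], continuous (Dy y)}.
Proof.
move=> cy; apply: wc_bigmax => i; apply: wc_bigmax => j.
by apply: wcD => //; apply: wcN.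
Qed.

Lemma ub_inv y s t Mx : ssol N M y -> 0 <= s -> s <= t ->
  (forall l, y l s <= Mx) -> forall l, y l t <= Mx.
Proof.
move=> hy s0 st H l.
have := @inv _ N M hN HM _ s (@ssol_aff _ N M y (-1) Mx hy) s0 _ t st l.
rewrite mulN1r addrC subr_ge0; apply => m.
by rewrite mulN1r addrC subr_ge0.
Qed.

Lemma lb_inv y s t mn : ssol N M y -> 0 <= s -> s <= t ->
  (forall l, mn <= y l s) -> forall l, mn <= y l t.
Proof.
move=> hy s0 st H l.
have := @inv _ N M hN HM _ s (@ssol_aff _ N M y 1 (- mn) hy) s0 _ t st l.
rewrite mul1r subr_ge0; apply => m.
by rewrite mul1r subr_ge0.
Qed.

Lemma Dy_mono y t1 t2 : ssol N M y -> 0 <= t1 -> t1 <= t2 -> Dy y t2 <= Dy y t1.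
Proof.
move=> hy t10 t12.
have [i0 Hi0] := @exmax _ N hN (fun i => y i t1).
have [j0 Hj0] := @exmin _ N hN (fun i => y i t1).
have ub := ub_inv hy t10 t12 Hi0.
have lb := lb_inv hy t10 t12 Hj0.
apply: le_trans (Dy_ge y t1 i0 j0).
apply: Dy_le; first by rewrite subr_ge0; exact: le_trans (Hj0 i0) (Hi0 i0).
by move=> i j; apply: lerB.
Qed.

Context (HMmeas : forall i j, measurable_fun (`[0%R, +oo[%classic : set R) (M i j)).

Lemma lowprop z s0 A (T mu0 a : R) (Gs : rel 'I_N) (I : 'I_N) (L : nat) :
  ssol N M z -> 0 <= s0 -> 0 < T -> (forall m, 0 <= z m s0) -> 0 <= A -> A <= z I s0 ->
  0 <= a -> a <= 1 -> a <= mu0 * T / N%:R ->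
  (forall (k : nat) l j, Gs l j ->
     mu0 <= T^-1 * \int[mu]_(u in `[s0 + k%:R * T, s0 + k%:R * T + T]) M l j u) ->
  (forall l, exists n, reachn Gs n l I /\ (n <= L)%N) ->
  forall l, A * a ^+ L * expR (- (2 * L%:R * T)) <= z l (s0 + L%:R * T).
Proof.
move=> hz s00 T0 zs A0 AI a0 a1 aN Hw Hd l.
have [n [rn nL]] := Hd l.
have hp := @prop _ N M hN HM HMmeas z s0 A T mu0 a Gs I hz s00 T0 zs A0 AI a0 aN Hw n l rn.
set u := s0 + n%:R * T in hp *.
set t := s0 + L%:R * T.
have nLr : n%:R <= L%:R :> R by rewrite ler_nat.
have su : s0 <= u by rewrite /u lerDl mulr_ge0 // ltW.
have ut : u <= t by rewrite /t /u lerD2l ler_wpM2r // ltW.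
have u0 : 0 <= u by apply: le_trans su.
have hd := @decay _ N M hN HM HMmeas z l u t hz u0 ut
  (fun m => @inv _ N M hN HM z s0 hz s00 zs u su m).
apply: le_trans hd.
apply: (@le_trans _ _ (expR (u - t) * (A * a ^+ n * expR (- (2 * n%:R * T))))); last first.
  by apply: ler_wpM2l => //; exact: ltW (expR_gt0 _).
have aLn : a ^+ L <= a ^+ n by apply: ler_wiXn2l.
have eE : expR (- (2 * L%:R * T)) <= expR (u - t) * expR (- (2 * n%:R * T)).
  rewrite -expRD ler_expR /u /t.
  have : n%:R * T <= L%:R * T by apply: ler_wpM2r => //; exact: ltW.
  lra.
have an0 : 0 <= a ^+ n by apply: exprn_ge0.
have aL0 : 0 <= a ^+ L by apply: exprn_ge0.
have e1 := expR_gt0 (- (2 * L%:R * T)).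
have e2 := expR_gt0 (u - t).
have e3 := expR_gt0 (- (2 * n%:R * T)).
have h1 : A * a ^+ L <= A * a ^+ n by apply: ler_wpM2l.
have h2 : A * a ^+ L * expR (- (2 * L%:R * T)) <= A * a ^+ n * expR (- (2 * L%:R * T)).
  by apply: ler_wpM2r => //; exact: ltW.
apply: le_trans h2 _.
have -> : expR (u - t) * (A * a ^+ n * expR (- (2 * n%:R * T))) =
  A * a ^+ n * (expR (u - t) * expR (- (2 * n%:R * T))) by ring.
by apply: ler_wpM2l => //; exact: mulr_ge0.
Qed.

Lemma period y s0 (T mu0 a : R) (Gs : rel 'I_N) (I : 'I_N) (L : nat) :
  ssol N M y -> 0 <= s0 -> 0 < T ->
  0 <= a -> a <= 1 -> a <= mu0 * T / N%:R ->
  (forall (k : nat) l j, Gs l j ->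
     mu0 <= T^-1 * \int[mu]_(u in `[s0 + k%:R * T, s0 + k%:R * T + T]) M l j u) ->
  (forall l, exists n, reachn Gs n l I /\ (n <= L)%N) ->
  Dy y (s0 + L%:R * T) <= (1 - 2^-1 * a ^+ L * expR (- (2 * L%:R * T))) * Dy y s0.
Proof.
move=> hy s00 T0 a0 a1 aN Hw Hd.
have [i0 Hi0] := @exmax _ N hN (fun i => y i s0).
have [j0 Hj0] := @exmin _ N hN (fun i => y i s0).
set Mx := y i0 s0 in Hi0 *; set mn := y j0 s0 in Hj0 *.
set t := s0 + L%:R * T.
have st : s0 <= t by rewrite /t lerDl mulr_ge0 // ltW.
have ub := ub_inv hy s00 st Hi0.
have lb := lb_inv hy s00 st Hj0.
set c := 2^-1 * a ^+ L * expR (- (2 * L%:R * T)).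
have aL0 : 0 <= a ^+ L by apply: exprn_ge0.
have aL1 : a ^+ L <= 1 by apply: exprn_ile1.
have e0 := expR_gt0 (- (2 * L%:R * T)).
have e1 : expR (- (2 * L%:R * T)) <= 1.
  by rewrite expR_le1 oppr_le0 !mulr_ge0 // ltW.
have c0 : 0 <= c.
  rewrite /c; apply: mulr_ge0; last exact: ltW.
  by apply: mulr_ge0 => //; rewrite invr_ge0.
have c1 : c <= 1.
  rewrite /c; have : a ^+ L * expR (- (2 * L%:R * T)) <= 1.
    apply: (@le_trans _ _ (1 * 1)); last by rewrite mulr1.
    by apply: ler_pM => //; exact: ltW.
  by rewrite -mulrA; lra.
have D0le : Mx - mn <= Dy y s0 := Dy_ge y s0 i0 j0.
have D00 : 0 <= Mx - mn by rewrite subr_ge0; exact: le_trans (Hj0 i0) (Hi0 i0).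
suff H : forall i j, y i t - y j t <= (1 - c) * (Mx - mn).
  apply: le_trans (Dy_le _ H) _; first by rewrite mulr_ge0 // subr_ge0.
  by apply: ler_wpM2l => //; rewrite subr_ge0.
have cD0 : 0 <= c * (Mx - mn) by apply: mulr_ge0.
case: (leP (y I s0) (2^-1 * (Mx + mn))) => hI.
  have hz := @ssol_aff _ N M y (-1) Mx hy.
  have zs : forall m, 0 <= -1 * y m s0 + Mx by move=> m; rewrite mulN1r addrC subr_ge0.
  have AI : 2^-1 * (Mx - mn) <= -1 * y I s0 + Mx by lra.
  have A0 : 0 <= 2^-1 * (Mx - mn) by lra.
  have hl := lowprop hz s00 T0 zs A0 AI a0 a1 aN Hw Hd.
  move=> i j; have := hl i; have := lb j.
  have -> : 2^-1 * (Mx - mn) * a ^+ L * expR (- (2 * L%:R * T)) = c * (Mx - mn).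
    by rewrite /c; ring.
  rewrite -/t; lra.
have hz := @ssol_aff _ N M y 1 (- mn) hy.
have zs : forall m, 0 <= 1 * y m s0 + - mn by move=> m; rewrite mul1r subr_ge0.
have AI : 2^-1 * (Mx - mn) <= 1 * y I s0 + - mn by lra.
have A0 : 0 <= 2^-1 * (Mx - mn) by lra.
have hl := lowprop hz s00 T0 zs A0 AI a0 a1 aN Hw Hd.
move=> i j; have := hl j; have := ub i.
have -> : 2^-1 * (Mx - mn) * a ^+ L * expR (- (2 * L%:R * T)) = c * (Mx - mn).
  by rewrite /c; ring.
rewrite -/t; lra.
Qed.

Lemma G_abs y i u : 0 <= u -> `|Gf N M y i u| <= (N%:R - 1) / N%:R * Dy y u.
Proof.
move=> u0; rewrite /Gf normrM ger0_norm; last by rewrite invr_ge0 ler0n.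
have H : `|\sum_(l < N) M i l u * (y l u - y i u)| <= (N%:R - 1) * Dy y u.
  rewrite (bigD1 i) //= subrr mulr0 add0r.
  apply: le_trans (ler_norm_sum _ _ _) _.
  apply: (@le_trans _ _ (\sum_(l < N | l != i) Dy y u)).
    apply: ler_sum => l _; rewrite normrM.
    have /andP[M0 M1] := HM i l u0; rewrite ger0_norm //.
    apply: (@le_trans _ _ (1 * `|y l u - y i u|)).
      by apply: ler_wpM2r.
    rewrite mul1r ler_norml; have := Dy_ge y u l i; have := Dy_ge y u i l; lra.
  have := sum_cst_ord N (Dy y u); rewrite (bigD1 i) //= => e.
  have -> : \sum_(l < N | l != i) Dy y u = Dy y u * N%:R - Dy y u by rewrite -e; ring.
  by rewrite mulrBl mul1r mulrC.
have -> : (N%:R - 1) / N%:R * Dy y u = N%:R^-1 * ((N%:R - 1) * Dy y u) by ring.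
by apply: ler_wpM2l => //; rewrite invr_ge0 ler0n.
Qed.

Lemma backward y t1 t2 : (1 < N)%N -> ssol N M y -> 0 <= t1 -> t1 <= t2 ->
  Dy y t1 <= expR (2 * ((N%:R - 1) / N%:R) * (t2 - t1)) * Dy y t2.
Proof.
move=> N1 hy t10 t12.
set k := 2 * ((N%:R - 1) / N%:R).
have Ng : 1 < N%:R :> R by rewrite ltr1n.
have k0 : 0 < k.
  rewrite /k mulr_gt0 // divr_gt0 //; [by rewrite subr_gt0 | exact: Nr_gt0].
suff H : expR (- (k * (t2 - t1))) * Dy y t1 <= Dy y t2.
  have -> : Dy y t1 = expR (k * (t2 - t1)) * (expR (- (k * (t2 - t1))) * Dy y t1).
    by rewrite mulrA -expRD subrr expR0 mul1r.
  by apply: ler_wpM2l => //; exact: ltW (expR_gt0 _).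
set C0 := expR (k * t1) * Dy y t1.
pose p u := C0 * expR (- k * u).
have pt2 : p t2 = expR (- (k * (t2 - t1))) * Dy y t1.
  by rewrite /p /C0 mulrAC -expRD; congr (expR _ * _); ring.
rewrite -pt2 leNgt; apply/negP => qt2.
have cp : continuous p.
  apply: cmulc; have := @cexpA _ (- k) 0; under eq_fun do rewrite add0r; exact.
pose q u := Dy y u - p u.
have cq : {within `[t1, t2], continuous q}.
  apply: wcD; first by apply: Dy_cont => i; exact: (hy i).1.
  by apply: wcN; apply: continuous_subspaceT.
have q0 : 0 <= q t1.
  by rewrite /q /p /C0 -mulrA mulrCA -expRD mulNr subrr expR0 mulr1 subrr.
have qt : q t2 < 0 by rewrite /q subr_lt0.
have [sg [t1sg sgt2 qsg qle]] := @LZ _ q t1 t2 t12 cq q0 qt.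
have sg0 : 0 <= sg by apply: le_trans t1sg.
have [i Hi] := @exmax _ N hN (fun i => y i sg).
have [j Hj] := @exmin _ N hN (fun i => y i sg).
have Dsg : Dy y sg <= y i sg - y j sg.
  apply: Dy_le; first by rewrite subr_ge0; exact: le_trans (Hj i) (Hi i).
  by move=> a b; apply: lerB.
have [igi eqi] := (hy i).2 sg t2 sg0 sgt2.
have [igj eqj] := (hy j).2 sg t2 sg0 sgt2.
have ip : mu.-integrable `[sg, t2] (EFin \o (fun u => - k * p u)).
  apply: cint; apply: continuous_subspaceT; apply: cmulc; exact: cp.
have key : \int[mu]_(u in `[sg, t2]) (- k * p u) <=
    \int[mu]_(u in `[sg, t2]) (Gf N M y i u - Gf N M y j u).
  apply: le_Rintegral => //; first exact: intB.
  move=> u /=; rewrite in_itv /= => /andP[sgu ut2].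
  have u0 : 0 <= u by apply: le_trans sgu.
  have hq := qle u sgu ut2; rewrite /q subr_le0 in hq.
  have gi := G_abs y i u0; have gj := G_abs y j u0.
  rewrite ler_norml in gi; rewrite ler_norml in gj.
  move/andP: gi => [gi _]; move/andP: gj => [_ gj].
  have : k * Dy y u <= k * p u by apply: ler_wpM2l => //; exact: ltW.
  rewrite /k in k0 *; lra.
have eint : \int[mu]_(u in `[sg, t2]) (- k * p u) = p t2 - p sg.
  transitivity (\int[mu]_(u in `[sg, t2]) (- C0 * (k * expR (- k * u)))).
    by apply: eq_Rintegral => u _; rewrite /p; ring.
  rewrite RintegralZl //; last first.
    apply: cint; apply: continuous_subspaceT; apply: cmulc.
    have := @cexpA _ (- k) 0; under eq_fun do rewrite add0r; exact.
  by rewrite int_exp // /p; ring.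
rewrite RintegralB // -eqi -eqj eint in key.
have := Dy_ge y t2 i j.
move: qsg; rewrite /q => qsg.
lra.
Qed.

End C.

Set Implicit Arguments. Unset Strict Implicit.
Section D.
Context {R : realType}.
Notation mu := (@lebesgue_measure R).

Lemma CS (d : nat) (f g : 'I_d -> R) :
  \sum_(k < d) f k * g k <= Num.sqrt (\sum_(k < d) f k ^+ 2) * Num.sqrt (\sum_(k < d) g k ^+ 2).
Proof.
set A := \sum_(k < d) f k ^+ 2; set B := \sum_(k < d) g k ^+ 2; set P := \sum_(k < d) f k * g k.
have A0 : 0 <= A by apply: sumr_ge0 => k _; exact: sqr_ge0.
have B0 : 0 <= B by apply: sumr_ge0 => k _; exact: sqr_ge0.
have L : 2 * (A * B - P * P) = \sum_(i < d) \sum_(j < d) (f i * g j - f j * g i) ^+ 2.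
  have eAB : A * B = \sum_(i < d) \sum_(j < d) (f i ^+ 2 * g j ^+ 2).
    by rewrite /A mulr_suml; apply: eq_bigr => i _; rewrite /B mulr_sumr.
  have eBA : A * B = \sum_(i < d) \sum_(j < d) (f j ^+ 2 * g i ^+ 2).
    rewrite mulrC /B mulr_suml; apply: eq_bigr => i _; rewrite /A mulr_sumr.
    by apply: eq_bigr => j _; rewrite mulrC.
  have ePP : P * P = \sum_(i < d) \sum_(j < d) (f i * g i * (f j * g j)).
    by rewrite /P mulr_suml; apply: eq_bigr => i _; rewrite mulr_sumr.
  have -> : 2 * (A * B - P * P) = A * B + A * B - 2 * (P * P) by ring.
  rewrite {1}eAB eBA ePP -big_split /= mulr_sumr -sumrB; apply: eq_bigr => i _.
  rewrite -big_split /= mulr_sumr -sumrB; apply: eq_bigr => j _.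
  by ring.
have PP : P * P <= A * B.
  have : 0 <= \sum_(i < d) \sum_(j < d) (f i * g j - f j * g i) ^+ 2.
    by apply: sumr_ge0 => i _; apply: sumr_ge0 => j _; exact: sqr_ge0.
  rewrite -L; lra.
have sA := sqrtr_ge0 A; have sB := sqrtr_ge0 B.
have sA2 : Num.sqrt A ^+ 2 = A by apply: sqr_sqrtr.
have sB2 : Num.sqrt B ^+ 2 = B by apply: sqr_sqrtr.
move: sA2 sB2; rewrite !expr2 => sA2 sB2.
have s2 : (Num.sqrt A * Num.sqrt B) * (Num.sqrt A * Num.sqrt B) = A * B.
  by rewrite mulrACA sA2 sB2.
have s0 : 0 <= Num.sqrt A * Num.sqrt B by apply: mulr_ge0.
move: s2 s0; set s := Num.sqrt A * Num.sqrt B => s2 s0.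
nra.
Qed.

Lemma Rint_sum (a b : R) (I : Type) (s : seq I) (F : I -> R -> R) :
  (forall i, mu.-integrable `[a, b] (EFin \o F i)) ->
  \int[mu]_(u in `[a, b]) (\sum_(i <- s) F i u) = \sum_(i <- s) \int[mu]_(u in `[a, b]) F i u
  /\ mu.-integrable `[a, b] (EFin \o (fun u => \sum_(i <- s) F i u)).
Proof.
move=> hF; elim: s => [|i s [IH1 IH2]].
  rewrite big_nil; under eq_Rintegral do rewrite big_nil.
  split; first by rewrite Rintegral_cst // mul0r.
  have -> : (EFin \o fun u => \sum_(i <- [::]) F i u) = (EFin \o (fun _ => 0) : R -> \bar R).
    by apply/funext => u /=; rewrite big_nil.
  by apply: cint; exact: wcc.
rewrite big_cons; under eq_Rintegral do rewrite big_cons.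
split; first by rewrite RintegralD // IH1.
pose G := fun u => \sum_(j <- s) F j u.
have -> : (EFin \o fun u => \sum_(j <- (i :: s)) F j u) =
    ((EFin \o F i) \+ (EFin \o G))%E.
  by apply/funext => u /=; rewrite big_cons EFinD.
exact: integrableD.
Qed.

Definition ssol0 (N : nat) (M : 'I_N -> 'I_N -> R -> R) (z : 'I_N -> R -> R) : Prop :=
  forall i t, 0 <= t -> mu.-integrable `[0, t] (EFin \o Gf N M z i) /\
    z i t = z i 0 + \int[mu]_(u in `[0, t]) Gf N M z i u.

Lemma ssol0_ssol N M z : @ssol0 N M z -> ssol N M z.
Proof.
move=> H i; split.
  move=> a b a0 ab; have b0 := le_trans a0 ab.
  have [ig _] := H i b b0.
  have cF := parameterized_integral_continuous b0 ig.
  have cG : {within `[0, b], continuous (fun u => z i 0 + \int[mu]_(v in `[0, u]) Gf N M z i v)}.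
    by apply: wcD => //; exact: wcc.
  apply: (@cont_sub _ _ 0 b) => //.
  apply: subspace_eq_continuous cG => u; rewrite inE /= in_itv /= => /andP[u0 ub].
  by have [_ e] := H i u u0; rewrite /from_subspace /= e.
move=> a b a0 ab; have b0 := le_trans a0 ab.
have [ig eb] := H i b b0; have [_ ea] := H i a a0.
split; first by apply: integrableS ig => //; apply: sub_cc.
by rewrite eb ea opprD addrACA subrr add0r int_split.
Qed.

Definition yv (N d : nat) (x : 'I_N -> R -> 'rV[R]_d) (v : 'rV[R]_d) : 'I_N -> R -> R :=
  fun l u => \sum_(k < d) v ord0 k * x l u ord0 k.

Lemma ssol_yv N d (M : 'I_N -> 'I_N -> R -> R) (x : 'I_N -> R -> 'rV[R]_d) v :
  is_solution M x -> ssol N M (yv x v).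
Proof.
move=> Hs; apply: ssol0_ssol => i t t0.
pose f k s := N%:R^-1 * \sum_(j < N) M i j s * (x j s ord0 k - x i s ord0 k).
have eG : Gf N M (yv x v) i = fun s => \sum_(k < d) v ord0 k * f k s.
  apply/funext => s; rewrite /Gf /yv /f.
  under [RHS]eq_bigr do rewrite mulrCA.
  rewrite -mulr_sumr; congr (_ * _).
  under [RHS]eq_bigr do rewrite mulr_sumr.
  rewrite exchange_big /=; apply: eq_bigr => j _.
  rewrite -sumrB mulr_sumr; apply: eq_bigr => k _; ring.
have ifk k : mu.-integrable `[0, t] (EFin \o f k) := (Hs i k t t0).1.
have [e1 e2] := @Rint_sum 0 t _ (index_enum 'I_d) (fun k s => v ord0 k * f k s)
  (fun k => @intZ _ (f k) 0 t (v ord0 k) (ifk k)).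
rewrite eG; split => //.
rewrite e1 /yv -big_split /=; apply: eq_bigr => k _.
by rewrite RintegralZl // (Hs i k t t0).2 mulrDr.
Qed.

Lemma diam_ge N d (x : 'I_N -> R -> 'rV[R]_d) t i j : enorm (x i t - x j t) <= diam x t.
Proof.
apply: le_trans (le_bigmax _ _ i).
exact: (le_bigmax _ (fun j => enorm (x i t - x j t)) j).
Qed.

Lemma enorm_ge0 d (v : 'rV[R]_d) : 0 <= enorm v.
Proof. exact: sqrtr_ge0. Qed.

Lemma reduce N d (M : 'I_N -> 'I_N -> R -> R) (x : 'I_N -> R -> 'rV[R]_d) t1 t2 F :
  (0 < N)%N -> is_solution M x -> 0 <= F ->
  (forall v, Dy (yv x v) t1 <= F * Dy (yv x v) t2) -> diam x t1 <= F * diam x t2.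
Proof.
move=> hN Hs F0 H.
have d0 : 0 <= diam x t2.
  exact: le_trans (enorm_ge0 _) (diam_ge x t2 (Ordinal hN) (Ordinal hN)).
apply: bigmax_le => [|i _]; first exact: mulr_ge0.
apply: bigmax_le => [|j _]; first exact: mulr_ge0.
set v := x i t1 - x j t1.
set nv := enorm v.
have nv0 : 0 <= nv := enorm_ge0 v.
have h1 : nv * nv = yv x v i t1 - yv x v j t1.
  rewrite -expr2 /nv /enorm sqr_sqrtr; last by apply: sumr_ge0 => k _; exact: sqr_ge0.
  rewrite /yv -sumrB; apply: eq_bigr => k _.
  by rewrite -mulrBr expr2; congr (_ * _); rewrite /v !mxE.
have h2 : forall a b, yv x v a t2 - yv x v b t2 <= nv * diam x t2.
  move=> a b; rewrite /yv -sumrB.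
  apply: (@le_trans _ _ (nv * enorm (x a t2 - x b t2))); last first.
    by apply: ler_wpM2l => //; exact: diam_ge.
  have -> : \sum_(k < d) (v ord0 k * x a t2 ord0 k - v ord0 k * x b t2 ord0 k) =
      \sum_(k < d) v ord0 k * (x a t2 - x b t2) ord0 k.
    by apply: eq_bigr => k _; rewrite !mxE mulrBr.
  exact: CS.
have h3 : Dy (yv x v) t2 <= nv * diam x t2 by apply: Dy_le => //; exact: mulr_ge0.
have h4 : nv * nv <= F * (nv * diam x t2).
  rewrite h1; apply: le_trans (Dy_ge _ _ i j) _.
  by apply: le_trans (H v) _; apply: ler_wpM2l.
have : nv * nv <= nv * (F * diam x t2) by rewrite mulrCA.
move: nv0; set X := F * diam x t2.
have X0 : 0 <= X by apply: mulr_ge0.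
nra.
Qed.

End D.

Theorem theorem1 (R : realType) (N d : nat) (HN : (2 <= N)%N) (Hd : (1 <= d)%N)
  (M : 'I_N -> 'I_N -> R -> R)
  (HMmeas : forall i j, measurable_fun (`[0%R, +oo[%classic : set R) (M i j))
  (HMrange : forall i j t, 0 <= t -> 0 <= M i j t <= 1)
  (x : 'I_N -> R -> 'rV[R]_d)
  (Hsol : is_solution M x)
  (T mu : R) (HT : 0 < T) (Hmu : 0 < mu)
  (Gs : rel 'I_N) (I : 'I_N) (dstar : nat)
  (HGs : forall (k : nat) (i j : 'I_N), Gs i j -> conn_arrow M T mu (k%:R * T) i j)
  (HI : globally_reachable Gs I)
  (Hdstar : is_length Gs I dstar) :
  let tau := dstar%:R * T in
  let C := 1 - 2^-1 * (mu * T / (N%:R + mu * T)) ^+ dstar * expR (- 2 * dstar%:R * T) in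
  let delta := - (N%:R / (2 * (N%:R - 1))) * ln C in
  let phi := fun t : R =>
    if t <= tau - delta then 1 else C * expR (2 * ((N%:R - 1) / N%:R) * (tau - t)) in
  (forall n : nat, diam x (n%:R * tau) <= C ^+ n * diam x 0) /\
  (forall (t : R) (n : nat), 0 <= t <= tau ->
     diam x (n%:R * tau + t) <= phi t * C ^+ n * diam x 0).
Proof.
move=> tau C delta phi.
have hN : (0 < N)%N by apply: leq_trans HN.
have N0 : 0 < N%:R :> R by rewrite ltr0n.
have muT : 0 < mu * T by apply: mulr_gt0.
set a := mu * T / (N%:R + mu * T).
have NmT : 0 < N%:R + mu * T by apply: addr_gt0.
have a0 : 0 <= a by rewrite /a divr_ge0 // ltW.
have a1 : a <= 1 by rewrite /a ler_pdivrMr // mul1r lerDr ltW.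
have aN : a <= mu * T / N%:R.
  rewrite /a; apply: ler_wpM2l; first exact: ltW.
  by rewrite lef_pV2 ?posrE // lerDl ltW.
have Hdd : forall l, exists n, reachn Gs n l I /\ (n <= dstar)%N.
  move=> l; have [n [[rn _] nL]] := Hdstar.1 l; by exists n.
have tau0 : 0 <= tau by rewrite /tau mulr_ge0 // ltW.
have Hw : forall n : nat, forall (k : nat) l j, Gs l j ->
    mu <= T^-1 * \int[lebesgue_measure]_(u in `[n%:R * tau + k%:R * T, n%:R * tau + k%:R * T + T]) M l j u.
  move=> n k l j glj; have := HGs (n * dstar + k)%N l j glj.
  rewrite /conn_arrow.
  have -> : (n * dstar + k)%N%:R * T = n%:R * tau + k%:R * T.
    by rewrite /tau natrD natrM; ring.
  by [].
have eC : C = 1 - 2^-1 * a ^+ dstar * expR (- (2 * dstar%:R * T)).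
  by rewrite /C !mulNr.
have C0 : 0 <= C.
  have aL1 : a ^+ dstar <= 1 by apply: exprn_ile1.
  have aL0 : 0 <= a ^+ dstar by apply: exprn_ge0.
  have e1 : expR (- (2 * dstar%:R * T)) <= 1.
    by rewrite expR_le1 oppr_le0 !mulr_ge0 // ltW.
  have e0 := expR_gt0 (- (2 * dstar%:R * T)).
  have : a ^+ dstar * expR (- (2 * dstar%:R * T)) <= 1.
    apply: (@le_trans _ _ (1 * 1)); last by rewrite mulr1.
    by apply: ler_pM => //; exact: ltW.
  rewrite eC -mulrA; lra.
have step : forall n : nat, diam x (n.+1%:R * tau) <= C * diam x (n%:R * tau).
  move=> n; apply: (reduce hN Hsol C0) => v.
  have s00 : 0 <= n%:R * tau by rewrite mulr_ge0.
  have := period hN HMrange HMmeas (ssol_yv v Hsol) s00 HT a0 a1 aN (Hw n) Hdd.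
  have -> : n.+1%:R * tau = n%:R * tau + dstar%:R * T by rewrite /tau -addn1 natrD; ring.
  by rewrite -eC.
have part1 : forall n : nat, diam x (n%:R * tau) <= C ^+ n * diam x 0.
  elim=> [|n IH]; first by rewrite mul0r expr0 mul1r.
  apply: le_trans (step n) _; rewrite exprS -mulrA.
  by apply: ler_wpM2l.
split => // t n /andP[t0 tt].
have s00 : 0 <= n%:R * tau by rewrite mulr_ge0.
rewrite /phi; case: ifP => _.
  rewrite mul1r; apply: le_trans (part1 n).
  rewrite -[X in _ <= X]mul1r; apply: (reduce hN Hsol ler01) => v; rewrite mul1r.
  apply: (Dy_mono hN HMrange (ssol_yv v Hsol) s00); by rewrite lerDl.
have e0 := expR_gt0 (2 * ((N%:R - 1) / N%:R) * (tau - t)).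
apply: (@le_trans _ _ (expR (2 * ((N%:R - 1) / N%:R) * (tau - t)) * diam x (n.+1%:R * tau))).
  apply: (reduce hN Hsol (ltW e0)) => v.
  have := backward hN HMrange HN (ssol_yv v Hsol) (addr_ge0 s00 t0) (_ : n%:R * tau + t <= n.+1%:R * tau).
  have -> : n.+1%:R * tau - (n%:R * tau + t) = tau - t.
    by rewrite -addn1 natrD; ring.
  apply.
  by rewrite -addn1 natrD mulrDl mul1r lerD2l.
have -> : C * expR (2 * ((N%:R - 1) / N%:R) * (tau - t)) * C ^+ n * diam x 0 =
  expR (2 * ((N%:R - 1) / N%:R) * (tau - t)) * (C ^+ n.+1 * diam x 0) by rewrite exprS; ring.
by apply: ler_wpM2l; [exact: ltW | exact: part1].
Qed.
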